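(* Let $f\colon X\to Y$ be a continuous map between path-connected spaces such that $f_*\colon\pi_1(X)\to\pi_1(Y)$ is an isomorphism. Then $\mathsf{TC}^{\mathcal D}(X)\le\mathsf{TC}^{\mathcal D}(Y)$. In particular $\mathsf{TC}^{\mathcal D}$ is a homotopy invariant.
   Context: For a path-connected space $Z$ with $\pi=\pi_1(Z)$, $\mathsf{TC}^{\mathcal D}(Z)$ is the least $k$ such that $Z\times Z=U_0\cup\dots\cup U_k$ with $U_i$ open and such that for every $i$ and every basepoint $u\in U_i$ the homomorphism $\pi_1(U_i,u)\to\pi_1(Z\times Z,u)\cong\pi\times\pi$ induced by inclusion takes values in a subgroup conjugate to the diagonal $\Delta\subset\pi\times\pi$. *)

(* Defs.v *)
From Stdlib Require Import Reals Lra.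
Open Scope R_scope.

Record space := Space {
  carrier :> Type;
  open : (carrier -> Prop) -> Prop;
  open_full : open (fun _ => True);
  open_inter : forall U V, open U -> open V -> open (fun x => U x /\ V x);
  open_union : forall F : (carrier -> Prop) -> Prop,
      (forall U, F U -> open U) -> open (fun x => exists U, F U /\ U x)
}.
Arguments open {s} _.

Definition cont (X Y : space) (f : X -> Y) : Prop :=
  forall V : Y -> Prop, open V -> open (fun x => V (f x)).

Definition R_open (U : R -> Prop) : Prop :=
  forall x, U x -> exists e, 0 < e /\ forall y, Rabs (y - x) < e -> U y.

Lemma R_open_full : R_open (fun _ => True).
Proof. intros x _; exists 1; split; [lra| auto]. Qed.

Lemma R_open_inter U V : R_open U -> R_open V -> R_open (fun x => U x /\ V x).
Proof.
  intros HU HV x [Ux Vx].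
  destruct (HU x Ux) as [e1 [He1 H1]]; destruct (HV x Vx) as [e2 [He2 H2]].
  exists (Rmin e1 e2); split; [now apply Rmin_pos|].
  intros y Hy; split; [apply H1|apply H2];
    eapply Rlt_le_trans; eauto; [apply Rmin_l|apply Rmin_r].
Qed.

Lemma R_open_union (F : (R -> Prop) -> Prop) :
  (forall U, F U -> R_open U) -> R_open (fun x => exists U, F U /\ U x).
Proof.
  intros HF x [U [FU Ux]].
  destruct (HF U FU x Ux) as [e [He H]].
  exists e; split; auto. intros y Hy; exists U; auto.
Qed.

Definition R_space : space := Space R R_open R_open_full R_open_inter R_open_union.

Section Sub.
Variable (X : space) (P : X -> Prop).
Definition sub_open (U : {x : X | P x} -> Prop) : Prop :=
  exists V : X -> Prop, open V /\ forall x, U x <-> V (proj1_sig x).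

Lemma sub_open_full : sub_open (fun _ => True).
Proof. exists (fun _ => True); split; [apply open_full| tauto]. Qed.

Lemma sub_open_inter U V : sub_open U -> sub_open V -> sub_open (fun x => U x /\ V x).
Proof.
  intros [A [HA EA]] [B [HB EB]]; exists (fun x => A x /\ B x); split.
  - now apply open_inter.
  - intros x; rewrite EA, EB; tauto.
Qed.

Lemma sub_open_union (F : ({x : X | P x} -> Prop) -> Prop) :
  (forall U, F U -> sub_open U) -> sub_open (fun x => exists U, F U /\ U x).
Proof.
  intros HF.
  exists (fun y => exists W, (exists U, F U /\ open W /\
             forall x, U x <-> W (proj1_sig x)) /\ W y); split.
  - apply open_union. intros W [U [_ [HW _]]]; exact HW.
  - intros x; split.
    + intros [U [FU Ux]]. destruct (HF U FU) as [W [HW EW]].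
      exists W; split; [exists U; auto| now apply EW].
    + intros [W [[U [FU [_ EW]]] Wx]]. exists U; split; auto; now apply EW.
Qed.

Definition sub_space : space :=
  Space {x : X | P x} sub_open sub_open_full sub_open_inter sub_open_union.
End Sub.

Section Prod.
Variable (X Y : space).
Definition prod_open (U : X * Y -> Prop) : Prop :=
  forall p, U p -> exists (A : X -> Prop) (B : Y -> Prop),
    open A /\ open B /\ A (fst p) /\ B (snd p) /\
    forall a b, A a -> B b -> U (a, b).

Lemma prod_open_full : prod_open (fun _ => True).
Proof.
  intros p _; exists (fun _ => True), (fun _ => True);
    repeat split; try apply open_full; auto.
Qed.

Lemma prod_open_inter U V : prod_open U -> prod_open V -> prod_open (fun x => U x /\ V x).
Proof.
  intros HU HV p [Up Vp].
  destruct (HU p Up) as [A [B [HA [HB [Ap [Bp H1]]]]]].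
  destruct (HV p Vp) as [A' [B' [HA' [HB' [Ap' [Bp' H2]]]]]].
  exists (fun a => A a /\ A' a), (fun b => B b /\ B' b).
  repeat split; try apply open_inter; auto; intuition.
Qed.

Lemma prod_open_union (F : (X * Y -> Prop) -> Prop) :
  (forall U, F U -> prod_open U) -> prod_open (fun x => exists U, F U /\ U x).
Proof.
  intros HF p [U [FU Up]].
  destruct (HF U FU p Up) as [A [B [HA [HB [Ap [Bp H]]]]]].
  exists A, B; repeat split; auto. intros a b Aa Bb; exists U; auto.
Qed.

Definition prod_space : space :=
  Space (X * Y) prod_open prod_open_full prod_open_inter prod_open_union.
End Prod.

Definition Iu : space := sub_space R_space (fun t => 0 <= t <= 1).

(** Paths are represented by functions R -> X whose restriction to [0,1]
    is continuous; only their values on [0,1] matter. *)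
Definition is_path (X : space) (p : R -> X) : Prop :=
  cont Iu X (fun t => p (proj1_sig t)).

Definition is_loop (X : space) (x : X) (p : R -> X) : Prop :=
  is_path X p /\ p 0 = x /\ p 1 = x.

Definition path_homotopic (X : space) (p q : R -> X) : Prop :=
  exists H : R -> R -> X,
    cont (prod_space Iu Iu) X
         (fun st => H (proj1_sig (fst st)) (proj1_sig (snd st))) /\
    (forall s, 0 <= s <= 1 -> H s 0 = p s /\ H s 1 = q s) /\
    (forall t, 0 <= t <= 1 -> H 0 t = p 0 /\ H 1 t = p 1).

Definition concat {X : Type} (p q : R -> X) : R -> X :=
  fun t => if Rle_dec t (1/2) then p (2 * t) else q (2 * t - 1).
Definition rev_path {X : Type} (p : R -> X) : R -> X := fun t => p (1 - t).

Definition path_connected (X : space) : Prop :=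
  inhabited X /\
  forall x y : X, exists p, is_path X p /\ p 0 = x /\ p 1 = y.

(** f_* : pi_1(X, x0) -> pi_1(Y, f x0) is a bijection (hence an isomorphism,
    being a homomorphism). *)
Definition pi1_iso (X Y : space) (f : X -> Y) (x0 : X) : Prop :=
  (forall l m, is_loop X x0 l -> is_loop X x0 m ->
     path_homotopic Y (fun t => f (l t)) (fun t => f (m t)) ->
     path_homotopic X l m) /\
  (forall l', is_loop Y (f x0) l' ->
     exists l, is_loop X x0 l /\ path_homotopic Y (fun t => f (l t)) l').

(** U (subset of Z x Z) satisfies the D-condition: for every u in U, the image
    of pi_1(U,u) -> pi_1(Z x Z, u) lies in a subgroup conjugate to the
    diagonal, i.e. in g . Delta_z . g^{-1} for some z and some path g in Z x Z
    from u to (z,z), where Delta_z = classes of loops (d,d) with d a loop at z. *)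
Definition D_set (Z : space) (U : prod_space Z Z -> Prop) : Prop :=
  forall u, U u ->
    exists (z : Z) (g : R -> prod_space Z Z),
      is_path (prod_space Z Z) g /\ g 0 = u /\ g 1 = (z, z) /\
      forall l : R -> prod_space Z Z,
        is_loop (prod_space Z Z) u l ->
        (forall t, 0 <= t <= 1 -> U (l t)) ->
        exists d : R -> Z, is_loop Z z d /\
          path_homotopic (prod_space Z Z) l
            (concat g (concat (fun t => (d t, d t)) (rev_path g))).

Definition TCD_le (Z : space) (k : nat) : Prop :=
  exists U : nat -> (prod_space Z Z -> Prop),
    (forall i, (i <= k)%nat -> open (U i) /\ D_set Z (U i)) /\
    (forall p, exists i, (i <= k)%nat /\ U i p).

Definition TCD (Z : space) (n : nat) : Prop :=
  TCD_le Z n /\ forall k, (k < n)%nat -> ~ TCD_le Z k.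

Definition homotopic_maps (X Y : space) (f g : X -> Y) : Prop :=
  exists H : X -> R -> Y,
    cont (prod_space X Iu) Y (fun p => H (fst p) (proj1_sig (snd p))) /\
    forall x, H x 0 = f x /\ H x 1 = g x.

Definition homotopy_equivalent (X Y : space) : Prop :=
  exists (f : X -> Y) (g : Y -> X), cont X Y f /\ cont Y X g /\
    homotopic_maps X X (fun x => g (f x)) (fun x => x) /\
    homotopic_maps Y Y (fun y => f (g y)) (fun y => y).

(* Main.v *)
Require Import Defs.
From Stdlib Require Import Reals Lra Lia Arith FunctionalExtensionality PropExtensionality Classical.
Open Scope R_scope.

Definition in01 (s : R) := 0 <= s <= 1.

Lemma open_ext (X : space) (U V : X -> Prop) : open U -> (forall x, U x <-> V x) -> open V.
Proof.
  intros HU E. assert (U = V) as <-; auto.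
  extensionality x; apply propositional_extensionality; auto.
Qed.

Lemma open_local (X : space) (W : X -> Prop) :
  (forall x, W x -> exists O, open O /\ O x /\ forall y, O y -> W y) -> open W.
Proof.
  intros H.
  apply (open_ext X (fun x => exists U, (open U /\ forall y, U y -> W y) /\ U x)).
  - apply open_union. intros U [HU _]; exact HU.
  - intros x; split.
    + intros [U [[_ HU] Ux]]; auto.
    + intros Wx; destruct (H x Wx) as [O [HO [Ox HOW]]]; exists O; auto.
Qed.

Lemma open_empty (X : space) : open (fun _ : X => False).
Proof.
  apply (open_ext X (fun x => exists U : X -> Prop, False /\ U x)).
  - apply open_union; tauto.
  - intros x; split; [intros [U [[] _]] | tauto].
Qed.

Lemma cont_comp (A B C : space) (f : A -> B) (g : B -> C) :
  cont A B f -> cont B C g -> cont A C (fun x => g (f x)).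
Proof. intros Hf Hg V HV. apply (Hf _ (Hg _ HV)). Qed.

Lemma cont_const (A B : space) (c : B) : cont A B (fun _ => c).
Proof.
  intros V HV. destruct (classic (V c)) as [H|H].
  - apply (open_ext A (fun _ => True)); [apply open_full| tauto].
  - apply (open_ext A (fun _ => False)); [apply open_empty| tauto].
Qed.

Lemma cont_id (A : space) : cont A A (fun x => x).
Proof. intros V HV; exact HV. Qed.

Lemma cont_fst (A B : space) : cont (prod_space A B) A fst.
Proof.
  intros V HV p Vp. exists V, (fun _ => True).
  repeat split; auto; apply open_full.
Qed.

Lemma cont_snd (A B : space) : cont (prod_space A B) B snd.
Proof.
  intros V HV p Vp. exists (fun _ => True), V.
  repeat split; auto; apply open_full.
Qed.

Lemma cont_pair (A B C : space) (f : A -> B) (g : A -> C) :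
  cont A B f -> cont A C g -> cont A (prod_space B C) (fun x => (f x, g x)).
Proof.
  intros Hf Hg V HV. apply open_local. intros x Vx.
  destruct (HV _ Vx) as [P [Q [HP [HQ [Pf [Qg H]]]]]].
  exists (fun y => P (f y) /\ Q (g y)). split; [apply open_inter; auto|].
  split; auto. intros y [Py Qy]. apply (H _ _ Py Qy).
Qed.

Lemma box_open (A B : space) (P : A -> Prop) (Q : B -> Prop) :
  open P -> open Q -> open (s := prod_space A B) (fun p => P (fst p) /\ Q (snd p)).
Proof.
  intros HP HQ p [Pp Qp]. exists P, Q; repeat split; auto.
Qed.

Lemma Iu_ball (c d : R) : open (s := Iu) (fun x => Rabs (proj1_sig x - c) < d).
Proof.
  exists (fun y => Rabs (y - c) < d). split; [|tauto].
  intros y Hy. exists (d - Rabs (y - c)). split; [lra|].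
  intros z Hz. pose proof (Rabs_triang (z - y) (y - c)).
  replace (z - y + (y - c)) with (z - c) in H by ring. lra.
Qed.

Lemma Iu_lt (c : R) : open (s := Iu) (fun x => proj1_sig x < c).
Proof.
  exists (fun y => y < c). split; [|tauto].
  intros y Hy. exists (c - y). split; [lra|].
  intros z Hz. pose proof (Rle_abs (z - y)). lra.
Qed.

Lemma Iu_gt (c : R) : open (s := Iu) (fun x => c < proj1_sig x).
Proof.
  exists (fun y => c < y). split; [|tauto].
  intros y Hy. exists (y - c). split; [lra|].
  intros z Hz. pose proof (Rle_abs (y - z)). rewrite Rabs_minus_sym in Hz. lra.
Qed.

Lemma Iu_open_ball (U : Iu -> Prop) x : open U -> U x ->
  exists e, 0 < e /\ forall y : Iu, Rabs (proj1_sig y - proj1_sig x) < e -> U y.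
Proof.
  intros [V [HV E]] Ux. apply E in Ux. destruct (HV _ Ux) as [e [He H]].
  exists e; split; auto. intros y Hy; apply E; auto.
Qed.

Definition rc2 (phi : R -> R -> R) := forall s t, in01 s -> in01 t -> forall e, 0 < e ->
  exists d, 0 < d /\ forall s' t', in01 s' -> in01 t' -> Rabs (s' - s) < d ->
    Rabs (t' - t) < d -> Rabs (phi s' t' - phi s t) < e.

Lemma rc2_const c : rc2 (fun _ _ => c).
Proof. intros s t _ _ e He; exists 1; split; [lra|]; intros; rewrite Rminus_diag, Rabs_R0; lra. Qed.
Lemma rc2_fst : rc2 (fun s _ => s).
Proof. intros s t _ _ e He; exists e; split; auto. Qed.
Lemma rc2_snd : rc2 (fun _ t => t).
Proof. intros s t _ _ e He; exists e; split; auto. Qed.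

Lemma rc2_plus f g : rc2 f -> rc2 g -> rc2 (fun s t => f s t + g s t).
Proof.
  intros Hf Hg s t hs ht e He.
  destruct (Hf s t hs ht (e/2)) as [d1 [Hd1 H1]]; [lra|].
  destruct (Hg s t hs ht (e/2)) as [d2 [Hd2 H2]]; [lra|].
  exists (Rmin d1 d2); split; [apply Rmin_pos; auto|].
  intros s' t' hs' ht' Hs Ht.
  assert (Rabs (s'-s) < d1 /\ Rabs (t'-t) < d1) as [a b].
  { pose proof (Rmin_l d1 d2); split; lra. }
  assert (Rabs (s'-s) < d2 /\ Rabs (t'-t) < d2) as [c d].
  { pose proof (Rmin_r d1 d2); split; lra. }
  specialize (H1 _ _ hs' ht' a b); specialize (H2 _ _ hs' ht' c d).
  pose proof (Rabs_triang (f s' t' - f s t) (g s' t' - g s t)).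
  replace (f s' t' - f s t + (g s' t' - g s t)) with (f s' t' + g s' t' - (f s t + g s t)) in H by ring.
  lra.
Qed.

Lemma rc2_opp f : rc2 f -> rc2 (fun s t => - f s t).
Proof.
  intros Hf s t hs ht e He. destruct (Hf s t hs ht e He) as [d [Hd H]].
  exists d; split; auto; intros. replace (- f s' t' - - f s t) with (- (f s' t' - f s t)) by ring.
  rewrite Rabs_Ropp; auto.
Qed.

Lemma rc2_minus f g : rc2 f -> rc2 g -> rc2 (fun s t => f s t - g s t).
Proof. intros; unfold Rminus; apply rc2_plus; auto; apply rc2_opp; auto. Qed.

Lemma rc2_mult f g : rc2 f -> rc2 g -> rc2 (fun s t => f s t * g s t).
Proof.
  intros Hf Hg s t hs ht e He.
  set (A := Rabs (f s t) + 1). set (B := Rabs (g s t) + 1).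
  assert (HA : 0 < A) by (unfold A; pose proof (Rabs_pos (f s t)); lra).
  assert (HB : 0 < B) by (unfold B; pose proof (Rabs_pos (g s t)); lra).
  destruct (Hf s t hs ht (e / (2 * B))) as [d1 [Hd1 H1]].
  { apply Rdiv_lt_0_compat; lra. }
  destruct (Hg s t hs ht (Rmin 1 (e / (2 * A)))) as [d2 [Hd2 H2]].
  { apply Rmin_pos; [lra|]. apply Rdiv_lt_0_compat; lra. }
  exists (Rmin d1 d2); split; [apply Rmin_pos; auto|].
  intros s' t' hs' ht' Hs Ht.
  assert (Rabs (s'-s) < d1 /\ Rabs (t'-t) < d1) as [a b].
  { pose proof (Rmin_l d1 d2); split; lra. }
  assert (Rabs (s'-s) < d2 /\ Rabs (t'-t) < d2) as [c d].
  { pose proof (Rmin_r d1 d2); split; lra. }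
  specialize (H1 _ _ hs' ht' a b); specialize (H2 _ _ hs' ht' c d).
  pose proof (Rmin_l 1 (e / (2 * A))) as m1. pose proof (Rmin_r 1 (e / (2 * A))) as m2.
  replace (f s' t' * g s' t' - f s t * g s t) with
    ((f s' t' - f s t) * g s' t' + f s t * (g s' t' - g s t)) by ring.
  eapply Rle_lt_trans; [apply Rabs_triang|]. rewrite !Rabs_mult.
  assert (Hg' : Rabs (g s' t') <= B).
  { unfold B. pose proof (Rabs_triang (g s' t' - g s t) (g s t)).
    replace (g s' t' - g s t + g s t) with (g s' t') in H by ring. lra. }
  assert (Hfa : Rabs (f s t) <= A) by (unfold A; lra).
  assert (E1 : Rabs (f s' t' - f s t) * Rabs (g s' t') <= e / (2 * B) * B).
  { apply Rmult_le_compat; try apply Rabs_pos; lra. }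
  assert (E2 : Rabs (f s t) * Rabs (g s' t' - g s t) < A * (e / (2 * A))).
  { apply Rle_lt_trans with (A * Rabs (g s' t' - g s t)).
    - apply Rmult_le_compat_r; [apply Rabs_pos| lra].
    - apply Rmult_lt_compat_l; lra. }
  replace (e / (2 * B) * B) with (e/2) in E1 by (field; lra).
  replace (A * (e / (2 * A))) with (e/2) in E2 by (field; lra).
  lra.
Qed.

Lemma Rmin_close a b c d e : Rabs (a - c) < e -> Rabs (b - d) < e -> Rabs (Rmin a b - Rmin c d) < e.
Proof. unfold Rmin; destruct (Rle_dec a b), (Rle_dec c d); intros H1 H2;
  revert H1 H2; unfold Rabs; repeat destruct Rcase_abs; lra. Qed.
Lemma Rmax_close a b c d e : Rabs (a - c) < e -> Rabs (b - d) < e -> Rabs (Rmax a b - Rmax c d) < e.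
Proof. unfold Rmax; destruct (Rle_dec a b), (Rle_dec c d); intros H1 H2;
  revert H1 H2; unfold Rabs; repeat destruct Rcase_abs; lra. Qed.

Lemma rc2_min f g : rc2 f -> rc2 g -> rc2 (fun s t => Rmin (f s t) (g s t)).
Proof.
  intros Hf Hg s t hs ht e He.
  destruct (Hf s t hs ht e He) as [d1 [Hd1 H1]].
  destruct (Hg s t hs ht e He) as [d2 [Hd2 H2]].
  exists (Rmin d1 d2); split; [apply Rmin_pos; auto|].
  intros s' t' hs' ht' Hs Ht. pose proof (Rmin_l d1 d2); pose proof (Rmin_r d1 d2).
  apply Rmin_close; [apply H1|apply H2]; auto; lra.
Qed.
Lemma rc2_max f g : rc2 f -> rc2 g -> rc2 (fun s t => Rmax (f s t) (g s t)).
Proof.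
  intros Hf Hg s t hs ht e He.
  destruct (Hf s t hs ht e He) as [d1 [Hd1 H1]].
  destruct (Hg s t hs ht e He) as [d2 [Hd2 H2]].
  exists (Rmin d1 d2); split; [apply Rmin_pos; auto|].
  intros s' t' hs' ht' Hs Ht. pose proof (Rmin_l d1 d2); pose proof (Rmin_r d1 d2).
  apply Rmax_close; [apply H1|apply H2]; auto; lra.
Qed.

Ltac rc2_tac := repeat first [ apply rc2_plus | apply rc2_minus | apply rc2_mult | apply rc2_min
  | apply rc2_max | apply rc2_opp | apply rc2_fst | apply rc2_snd | apply rc2_const ].

Definition cont2 (Z : space) (H : R -> R -> Z) :=
  cont (prod_space Iu Iu) Z (fun st => H (proj1_sig (fst st)) (proj1_sig (snd st))).

Lemma cont2_comp (Z : space) (H : R -> R -> Z) phi psi : cont2 Z H -> rc2 phi -> rc2 psi ->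
  (forall s t, in01 s -> in01 t -> in01 (phi s t) /\ in01 (psi s t)) ->
  cont2 Z (fun s t => H (phi s t) (psi s t)).
Proof.
  intros HH Hphi Hpsi Hin V HV. apply open_local.
  intros [[s hs] [t ht]] Vx; simpl in Vx.
  destruct (Hin s t hs ht) as [i1 i2].
  specialize (HH V HV (exist _ _ i1, exist _ _ i2) Vx).
  destruct HH as [A [B [HA [HB [Ap [Bp Hbox]]]]]].
  destruct (Iu_open_ball A _ HA Ap) as [e1 [He1 E1]].
  destruct (Iu_open_ball B _ HB Bp) as [e2 [He2 E2]]. simpl in E1, E2.
  destruct (Hphi s t hs ht e1 He1) as [d1 [Hd1 D1]].
  destruct (Hpsi s t hs ht e2 He2) as [d2 [Hd2 D2]].
  set (d := Rmin d1 d2).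
  assert (0 < d) by (apply Rmin_pos; auto).
  pose proof (Rmin_l d1 d2); pose proof (Rmin_r d1 d2).
  exists (fun p : prod_space Iu Iu => Rabs (proj1_sig (fst p) - s) < d /\ Rabs (proj1_sig (snd p) - t) < d).
  split; [apply (box_open Iu Iu (fun x => Rabs (proj1_sig x - s) < d) (fun x => Rabs (proj1_sig x - t) < d)); apply Iu_ball|].
  split; [simpl; rewrite !Rminus_diag, Rabs_R0; auto|].
  intros [[s' hs'] [t' ht']] [Hs Ht]; simpl in Hs, Ht |- *.
  destruct (Hin s' t' hs' ht') as [j1 j2].
  apply (Hbox (exist _ _ j1) (exist _ _ j2)).
  - apply E1; simpl. apply D1; auto; unfold d in *; lra.
  - apply E2; simpl. apply D2; auto; unfold d in *; lra.
Qed.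

Lemma cont2_ext (Z : space) (A B : R -> R -> Z) : cont2 Z A ->
  (forall s t, in01 s -> in01 t -> A s t = B s t) -> cont2 Z B.
Proof.
  intros HA E. unfold cont2.
  replace (fun st : prod_space Iu Iu => B (proj1_sig (fst st)) (proj1_sig (snd st)))
    with (fun st : prod_space Iu Iu => A (proj1_sig (fst st)) (proj1_sig (snd st))); auto.
  extensionality st. destruct st as [[s hs] [t ht]]; simpl; auto.
Qed.

Lemma cont2_paste (Z : space) (A B : R -> R -> Z) : cont2 Z A -> cont2 Z B ->
  (forall t, in01 t -> A (1/2) t = B (1/2) t) ->
  cont2 Z (fun s t => if Rle_dec s (1/2) then A s t else B s t).
Proof.
  intros HA HB E V HV. apply open_local.
  intros [[s hs] [t ht]] Vx; simpl in Vx.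
  pose proof (HA V HV) as WA. pose proof (HB V HV) as WB.
  destruct (total_order_T s (1/2)) as [[Hlt|Heq]|Hgt].
  - exists (fun p : prod_space Iu Iu => V (A (proj1_sig (fst p)) (proj1_sig (snd p))) /\
       (proj1_sig (fst p) < 1/2 /\ True)).
    split. { apply open_inter; auto. apply (box_open Iu Iu (fun x => proj1_sig x < 1/2) (fun _ => True)); [apply Iu_lt|apply open_full]. }
    split. { simpl. destruct (Rle_dec s (1/2)); [|lra]. auto. }
    intros [[s' hs'] [t' ht']] [H1 [H2 _]]; simpl in *.
    destruct (Rle_dec s' (1/2)); [auto|lra].
  - subst s. exists (fun p : prod_space Iu Iu => V (A (proj1_sig (fst p)) (proj1_sig (snd p))) /\
       V (B (proj1_sig (fst p)) (proj1_sig (snd p)))).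
    split. { apply open_inter; auto. }
    simpl. destruct (Rle_dec (1/2) (1/2)); [|lra].
    split. { rewrite <- E; auto. }
    intros [[s' hs'] [t' ht']] [H1 H2]; simpl in *.
    destruct (Rle_dec s' (1/2)); auto.
  - exists (fun p : prod_space Iu Iu => V (B (proj1_sig (fst p)) (proj1_sig (snd p))) /\
       (1/2 < proj1_sig (fst p) /\ True)).
    split. { apply open_inter; auto. apply (box_open Iu Iu (fun x => 1/2 < proj1_sig x) (fun _ => True)); [apply Iu_gt|apply open_full]. }
    split. { simpl. destruct (Rle_dec s (1/2)); [lra|]. auto. }
    intros [[s' hs'] [t' ht']] [H1 [H2 _]]; simpl in *.
    destruct (Rle_dec s' (1/2)); [lra|auto].
Qed.

Lemma is_path_cont2 Z p : is_path Z p -> cont2 Z (fun s _ => p s).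
Proof. intros Hp. exact (cont_comp (prod_space Iu Iu) Iu Z (@fst Iu Iu) _ (cont_fst Iu Iu) Hp). Qed.

Definition pt0 : Iu := exist _ 0 (conj (Rle_refl 0) Rle_0_1).

Lemma cont2_is_path Z p : cont2 Z (fun s _ => p s) -> is_path Z p.
Proof.
  intros H V HV. apply open_local. intros x Vx.
  specialize (H V HV (x, pt0) Vx). destruct H as [A [B [HA [HB [Ax [B0 Hb]]]]]].
  exists A; split; auto; split; auto. intros y Ay. exact (Hb y pt0 Ay B0).
Qed.

Definition clamp (x : R) := Rmax 0 (Rmin 1 x).
Lemma clamp_in x : in01 (clamp x).
Proof. unfold clamp, in01, Rmax, Rmin; repeat destruct Rle_dec; lra. Qed.
Lemma clamp_id x : in01 x -> clamp x = x.
Proof. unfold clamp, in01, Rmax, Rmin; repeat destruct Rle_dec; lra. Qed.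

Lemma rc2_clamp f : rc2 f -> rc2 (fun s t => clamp (f s t)).
Proof. intros; unfold clamp; rc2_tac; auto. Qed.


Ltac rc := solve [repeat first [ apply rc2_clamp | apply rc2_plus | apply rc2_minus | apply rc2_mult | apply rc2_min
  | apply rc2_max | apply rc2_opp | apply rc2_fst | apply rc2_snd | apply rc2_const ] ].
Ltac side := try assumption; try rc; try solve [unfold in01; intros; lra];
  try solve [intros; split; try apply clamp_in; auto]; try solve [intros; apply clamp_in]; try tauto.

Lemma cont2_paste2 (Z : space) (A B : R -> R -> Z) : cont2 Z A -> cont2 Z B ->
  (forall s, in01 s -> A s (1/2) = B s (1/2)) ->
  cont2 Z (fun s t => if Rle_dec t (1/2) then A s t else B s t).
Proof.
  intros HA HB E.
  assert (HA' : cont2 Z (fun a b => A b a)).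
  { apply (cont2_comp Z A (fun a b => b) (fun a b => a)); side. }
  assert (HB' : cont2 Z (fun a b => B b a)).
  { apply (cont2_comp Z B (fun a b => b) (fun a b => a)); side. }
  pose proof (cont2_paste Z _ _ HA' HB' E) as P.
  apply (cont2_comp Z _ (fun a b => b) (fun a b => a) P); [apply rc2_snd|apply rc2_fst|tauto].
Qed.

Lemma cont2_reparam Z p (theta : R -> R -> R) : is_path Z p -> rc2 theta ->
  (forall s t, in01 s -> in01 t -> in01 (theta s t)) -> cont2 Z (fun s t => p (theta s t)).
Proof.
  intros Hp Ht Hin. apply (cont2_comp Z (fun a _ => p a) theta (fun _ t => t)); auto.
  - apply is_path_cont2; auto.
  - apply rc2_snd.
Qed.

Lemma is_path_reparam Z p (phi : R -> R) : is_path Z p -> rc2 (fun s _ => phi s) ->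
  (forall s, in01 s -> in01 (phi s)) -> is_path Z (fun s => p (phi s)).
Proof.
  intros. apply cont2_is_path. apply (cont2_reparam Z p (fun s _ => phi s)); auto.
Qed.

Lemma is_path_ext Z p q : is_path Z p -> (forall s, in01 s -> p s = q s) -> is_path Z q.
Proof.
  intros Hp E. apply cont2_is_path. apply (cont2_ext Z (fun s _ => p s)); auto.
  apply is_path_cont2; auto.
Qed.

Lemma is_path_concat Z p q : is_path Z p -> is_path Z q -> p 1 = q 0 -> is_path Z (concat p q).
Proof.
  intros Hp Hq E. apply cont2_is_path.
  apply (cont2_ext Z (fun s t => if Rle_dec s (1/2) then p (clamp (2*s)) else q (clamp (2*s-1)))).
  - apply cont2_paste.
    + apply (cont2_reparam Z p (fun s _ => clamp (2*s))); side.
    + apply (cont2_reparam Z q (fun s _ => clamp (2*s-1))); side.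
    + intros. rewrite !clamp_id; unfold in01; try lra.
      replace (2 * (1/2)) with 1 by field. replace (1 - 1) with 0 by ring. auto.
  - intros s t hs ht. unfold concat, in01 in *. destruct Rle_dec; rewrite clamp_id; unfold in01; auto; lra.
Qed.

Lemma is_path_rev Z p : is_path Z p -> is_path Z (rev_path p).
Proof.
  intros. unfold rev_path. apply (is_path_reparam Z p (fun s => 1 - s)); auto.
  - rc2_tac.
  - unfold in01; intros; lra.
Qed.

Lemma is_path_map (Z W : space) (f : Z -> W) p : cont Z W f -> is_path Z p -> is_path W (fun s => f (p s)).
Proof. intros Hf Hp. exact (cont_comp _ _ _ _ _ Hp Hf). Qed.

Lemma is_path_const (Z : space) (c : Z) : is_path Z (fun _ => c).
Proof. exact (cont_const Iu Z c). Qed.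

Lemma is_path_pair (Z W : space) (p : R -> Z) (q : R -> W) : is_path Z p -> is_path W q ->
  is_path (prod_space Z W) (fun s => (p s, q s)).
Proof. intros Hp Hq. exact (cont_pair _ _ _ _ _ Hp Hq). Qed.

Notation htp := path_homotopic.

Lemma htp_ends Z p q : htp Z p q -> p 0 = q 0 /\ p 1 = q 1.
Proof.
  intros [H [_ [E1 E2]]].
  assert (i0 : in01 0) by (unfold in01; lra). assert (i1 : in01 1) by (unfold in01; lra).
  destruct (E1 0 i0), (E1 1 i1), (E2 0 i0), (E2 1 i1). split; congruence.
Qed.

Lemma htp_path Z p q : htp Z p q -> is_path Z p /\ is_path Z q.
Proof.
  intros [H [HC [E1 E2]]]. split.
  - apply cont2_is_path. apply (cont2_ext Z (fun s t => H s 0)).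
    + apply (cont2_comp Z H (fun s _ => s) (fun _ _ => 0)); side.
    + intros; apply E1; auto.
  - apply cont2_is_path. apply (cont2_ext Z (fun s t => H s 1)).
    + apply (cont2_comp Z H (fun s _ => s) (fun _ _ => 1)); side.
    + intros; apply E1; auto.
Qed.

Lemma htp_ext Z p q p' q' : htp Z p q -> (forall s, in01 s -> p s = p' s) ->
  (forall s, in01 s -> q s = q' s) -> htp Z p' q'.
Proof.
  intros [H [HC [E1 E2]]] Ep Eq.
  assert (i0 : in01 0) by (unfold in01; lra). assert (i1 : in01 1) by (unfold in01; lra).
  exists H; split; auto; split.
  - intros s hs; rewrite <- Ep, <- Eq; auto.
  - intros t ht; rewrite <- Ep, <- Ep; auto.
Qed.

Lemma htp_refl Z p : is_path Z p -> htp Z p p.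
Proof.
  intros Hp. exists (fun s _ => p s). split; [apply is_path_cont2; auto|]. split; auto.
Qed.

Lemma htp_sym Z p q : htp Z p q -> htp Z q p.
Proof.
  intros Hh. destruct (htp_ends Z p q Hh) as [e0 e1].
  destruct Hh as [H [HC [E1 E2]]].
  exists (fun s t => H s (1 - t)). split.
  - apply (cont2_comp Z H (fun s _ => s) (fun _ t => 1 - t)); side.
  - split; intros s hs.
    + replace (1 - 0) with 1 by ring. replace (1 - 1) with 0 by ring. split; apply E1; auto.
    + rewrite <- e0, <- e1. apply E2; unfold in01 in *; lra.
Qed.

Lemma htp_trans Z p q r : htp Z p q -> htp Z q r -> htp Z p r.
Proof.
  intros H1 H2. destruct (htp_ends Z p q H1) as [e0 e1].
  destruct H1 as [F [FC [F1 F2]]]. destruct H2 as [G [GC [G1 G2]]].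
  exists (fun s t => if Rle_dec t (1/2) then F s (2*t) else G s (2*t-1)). split.
  - change (cont2 Z (fun s t => if Rle_dec t (1/2) then F s (2*t) else G s (2*t-1))).
    apply (cont2_ext Z (fun s t => if Rle_dec t (1/2) then F s (clamp (2*t)) else G s (clamp (2*t-1)))).
    + apply cont2_paste2.
      * apply (cont2_comp Z F (fun s _ => s) (fun _ t => clamp (2*t))); side.
      * apply (cont2_comp Z G (fun s _ => s) (fun _ t => clamp (2*t-1))); side.
      * intros s hs. rewrite !clamp_id; unfold in01; try lra.
        replace (2 * (1/2)) with 1 by field. replace (1 - 1) with 0 by ring.
        destruct (F1 s hs), (G1 s hs). congruence.
    + intros s t hs ht. unfold in01 in *. destruct Rle_dec; rewrite clamp_id; unfold in01; auto; lra.
  - split.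
    + intros s hs. destruct (Rle_dec 0 (1/2)); [|lra]. destruct (Rle_dec 1 (1/2)); [lra|].
      replace (2*0) with 0 by ring. replace (2*1-1) with 1 by ring.
      split; [apply F1|apply G1]; auto.
    + intros t ht. unfold in01 in *. destruct Rle_dec.
      * apply F2; unfold in01; lra.
      * rewrite e0, e1. apply G2; unfold in01; lra.
Qed.

Lemma htp_map (Z W : space) (f : Z -> W) p q : cont Z W f -> htp Z p q ->
  htp W (fun s => f (p s)) (fun s => f (q s)).
Proof.
  intros Hf [H [HC [E1 E2]]]. exists (fun s t => f (H s t)). split.
  - exact (cont_comp _ _ _ _ _ HC Hf).
  - split; intros s hs; [destruct (E1 s hs)|destruct (E2 s hs)]; split; congruence.
Qed.

Lemma htp_rev Z p q : htp Z p q -> htp Z (rev_path p) (rev_path q).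
Proof.
  intros [H [HC [E1 E2]]]. exists (fun s t => H (1 - s) t). split.
  - apply (cont2_comp Z H (fun s _ => 1 - s) (fun _ t => t)); side.
  - unfold rev_path. split.
    + intros s hs; apply E1; unfold in01 in *; lra.
    + intros t ht. replace (1 - 0) with 1 by ring. replace (1 - 1) with 0 by ring.
      destruct (E2 t ht); split; auto.
Qed.

Lemma htp_concat Z p p' q q' : htp Z p p' -> htp Z q q' -> p 1 = q 0 ->
  htp Z (concat p q) (concat p' q').
Proof.
  intros H1 H2 E. destruct H1 as [F [FC [F1 F2]]]. destruct H2 as [G [GC [G1 G2]]].
  exists (fun s t => if Rle_dec s (1/2) then F (2*s) t else G (2*s-1) t). split.
  - change (cont2 Z (fun s t => if Rle_dec s (1/2) then F (2*s) t else G (2*s-1) t)).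
    apply (cont2_ext Z (fun s t => if Rle_dec s (1/2) then F (clamp (2*s)) t else G (clamp (2*s-1)) t)).
    + apply cont2_paste.
      * apply (cont2_comp Z F (fun s _ => clamp (2*s)) (fun _ t => t)); side.
      * apply (cont2_comp Z G (fun s _ => clamp (2*s-1)) (fun _ t => t)); side.
      * intros t ht. rewrite !clamp_id; unfold in01; try lra.
        replace (2 * (1/2)) with 1 by field. replace (1 - 1) with 0 by ring.
        destruct (F2 t ht), (G2 t ht). congruence.
    + intros s t hs ht. unfold in01 in *. destruct Rle_dec; rewrite clamp_id; unfold in01; auto; lra.
  - unfold concat. split.
    + intros s hs. unfold in01 in *. destruct Rle_dec; [apply F1|apply G1]; unfold in01; lra.
    + intros t ht. destruct (Rle_dec 0 (1/2)); [|lra]. destruct (Rle_dec 1 (1/2)); [lra|].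
      replace (2*0) with 0 by ring. replace (2*1-1) with 1 by ring.
      split; [apply F2|apply G2]; auto.
Qed.

Lemma htp_pair (Z W : space) (p q : R -> Z) (p' q' : R -> W) : htp Z p q -> htp W p' q' ->
  htp (prod_space Z W) (fun s => (p s, p' s)) (fun s => (q s, q' s)).
Proof.
  intros [F [FC [F1 F2]]] [G [GC [G1 G2]]]. exists (fun s t => (F s t, G s t)). split.
  - exact (cont_pair _ _ _ _ _ FC GC).
  - split; intros s hs; [destruct (F1 s hs), (G1 s hs)|destruct (F2 s hs), (G2 s hs)];
      split; congruence.
Qed.

Lemma htp_reparam Z p theta a b : is_path Z p -> rc2 theta ->
  (forall s t, in01 s -> in01 t -> in01 (theta s t)) ->
  (forall t, in01 t -> theta 0 t = theta 0 0 /\ theta 1 t = theta 1 0) ->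
  (forall s, in01 s -> a s = p (theta s 0)) -> (forall s, in01 s -> b s = p (theta s 1)) ->
  htp Z a b.
Proof.
  intros Hp Ht Hin E Ea Eb.
  assert (i0 : in01 0) by (unfold in01; lra). assert (i1 : in01 1) by (unfold in01; lra).
  exists (fun s t => p (theta s t)). split; [apply cont2_reparam; auto|].
  split.
  - intros s hs; rewrite Ea, Eb; auto.
  - intros t ht; destruct (E t ht) as [A B]. rewrite Ea, Ea, A, B; auto.
Qed.

Definition Pth (Z : space) (p : R -> Z) a b := is_path Z p /\ p 0 = a /\ p 1 = b.

Lemma concat_0 {X : Type} (p q : R -> X) : concat p q 0 = p 0.
Proof. unfold concat; destruct Rle_dec; [|lra]. f_equal; ring. Qed.
Lemma concat_1 {X : Type} (p q : R -> X) : concat p q 1 = q 1.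
Proof. unfold concat; destruct Rle_dec; [lra|]. f_equal; ring. Qed.

Lemma Pth_concat Z p q a b c : Pth Z p a b -> Pth Z q b c -> Pth Z (concat p q) a c.
Proof.
  intros [Hp [p0 p1]] [Hq [q0 q1]]. split; [apply is_path_concat; [auto|auto|congruence]|].
  rewrite concat_0, concat_1; auto.
Qed.
Lemma Pth_rev Z p a b : Pth Z p a b -> Pth Z (rev_path p) b a.
Proof.
  intros [Hp [p0 p1]]. split; [apply is_path_rev; auto|]. unfold rev_path.
  replace (1-0) with 1 by ring; replace (1-1) with 0 by ring; auto.
Qed.
Lemma Pth_const (Z : space) (a : Z) : Pth Z (fun _ => a) a a.
Proof. split; auto; apply is_path_const. Qed.
Lemma Pth_map (Z W : space) (f : Z -> W) p a b : cont Z W f -> Pth Z p a b -> Pth W (fun s => f (p s)) (f a) (f b).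
Proof. intros Hf [Hp [p0 p1]]; split; [apply is_path_map; auto|]; subst; auto. Qed.

#[export] Hint Resolve Pth_concat Pth_rev Pth_const : pth.

Lemma conv_in a b t : in01 a -> in01 b -> in01 t -> in01 ((1-t)*a + t*b).
Proof. unfold in01; intros; nra. Qed.

Lemma htp_reparam_phi Z B (phi : R -> R) a : is_path Z B -> rc2 (fun s _ => phi s) ->
  (forall s, in01 s -> in01 (phi s)) -> phi 0 = 0 -> phi 1 = 1 ->
  (forall s, in01 s -> a s = B (phi s)) -> htp Z a B.
Proof.
  intros HB Hphi Hin E0 E1 Ea.
  apply (htp_reparam Z B (fun s t => (1-t)*phi s + t*s)); auto.
  - apply rc2_plus; apply rc2_mult; auto; [apply rc2_minus; [apply rc2_const|apply rc2_snd]|apply rc2_snd|apply rc2_fst].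
  - intros; apply conv_in; auto.
  - intros t ht. rewrite E0, E1. split; ring.
  - intros s hs. rewrite Ea; auto. f_equal; ring.
  - intros s hs. f_equal; ring.
Qed.

Ltac rcases := repeat match goal with |- context [Rle_dec ?a ?b] => destruct (Rle_dec a b) end;
  try solve [exfalso; lra]; try solve [f_equal; lra]; try reflexivity.

Definition phiA s := Rmin (2*s) (Rmin (s + 1/4) ((s+1)/2)).
Lemma phiA_1 s : s <= 1/4 -> phiA s = 2*s.
Proof. unfold phiA, Rmin; intros; repeat destruct Rle_dec; lra. Qed.
Lemma phiA_2 s : 1/4 <= s <= 1/2 -> phiA s = s + 1/4.
Proof. unfold phiA, Rmin; intros; repeat destruct Rle_dec; lra. Qed.
Lemma phiA_3 s : 1/2 <= s -> phiA s = (s+1)/2.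
Proof. unfold phiA, Rmin; intros; repeat destruct Rle_dec; lra. Qed.

Lemma G_assoc Z p q r a b c d : Pth Z p a b -> Pth Z q b c -> Pth Z r c d ->
  htp Z (concat (concat p q) r) (concat p (concat q r)).
Proof.
  intros Hp Hq Hr.
  apply (htp_reparam_phi Z _ phiA).
  - exact (proj1 (Pth_concat Z p (concat q r) a b d Hp (Pth_concat Z q r b c d Hq Hr))).
  - unfold phiA; rc.
  - intros s hs; unfold in01 in *. destruct (Rle_dec s (1/4)); [rewrite phiA_1|
     destruct (Rle_dec s (1/2)); [rewrite phiA_2|rewrite phiA_3]]; lra.
  - rewrite phiA_1; lra.
  - rewrite phiA_3; lra.
  - intros s hs. unfold concat.
    destruct (Rle_dec s (1/4)); [rewrite phiA_1 by lra|
     destruct (Rle_dec s (1/2)); [rewrite phiA_2 by lra|rewrite phiA_3 by lra]]; rcases.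
Qed.

Lemma G_unit_l Z p a b : Pth Z p a b -> htp Z (concat (fun _ => a) p) p.
Proof.
  intros [Hp [p0 p1]].
  apply (htp_reparam_phi Z _ (fun s => Rmax 0 (2*s-1))); auto.
  - rc.
  - intros s; unfold in01, Rmax; destruct Rle_dec; lra.
  - unfold Rmax; destruct Rle_dec; lra.
  - unfold Rmax; destruct Rle_dec; lra.
  - intros s hs. unfold concat, Rmax. rcases; subst; f_equal; lra.
Qed.

Lemma G_unit_r Z p a b : Pth Z p a b -> htp Z (concat p (fun _ => b)) p.
Proof.
  intros [Hp [p0 p1]].
  apply (htp_reparam_phi Z _ (fun s => Rmin 1 (2*s))); auto.
  - rc.
  - intros s; unfold in01, Rmin; destruct Rle_dec; lra.
  - unfold Rmin; destruct Rle_dec; lra.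
  - unfold Rmin; destruct Rle_dec; lra.
  - intros s hs. unfold concat, Rmin. rcases; subst; f_equal; lra.
Qed.

Lemma G_inv_r Z p a b : Pth Z p a b -> htp Z (concat p (rev_path p)) (fun _ => a).
Proof.
  intros [Hp [p0 p1]].
  apply (htp_reparam Z p (fun s t => (1-t) * Rmin (2*s) (2-2*s))); auto.
  - rc.
  - intros s t; unfold in01, Rmin; destruct Rle_dec; intros; nra.
  - intros t ht; unfold Rmin; rcases; split; ring_simplify; lra.
  - intros s hs; unfold concat, rev_path, Rmin; rcases.
  - intros s hs. subst. f_equal; ring.
Qed.

Lemma G_inv_l Z p a b : Pth Z p a b -> htp Z (concat (rev_path p) p) (fun _ => b).
Proof.
  intros [Hp [p0 p1]].
  apply (htp_reparam Z p (fun s t => 1 - (1-t) * Rmin (2*s) (2-2*s))); auto.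
  - rc.
  - intros s t; unfold in01, Rmin; destruct Rle_dec; intros; nra.
  - intros t ht; unfold Rmin; rcases; split; ring_simplify; lra.
  - intros s hs; unfold concat, rev_path, Rmin; rcases.
  - intros s hs. subst. f_equal; ring.
Qed.

Lemma Pth_path Z p a b : Pth Z p a b -> is_path Z p.
Proof. intros [H _]; exact H. Qed.

Lemma htp_concat' Z p p' q q' a b c : Pth Z p a b -> Pth Z q b c -> htp Z p p' -> htp Z q q' ->
  htp Z (concat p q) (concat p' q').
Proof. intros [_ [_ p1]] [_ [q0 _]] H1 H2. apply htp_concat; auto; congruence. Qed.

Lemma concat_ext {X : Type} (p p' q q' : R -> X) : (forall s, in01 s -> p s = p' s) ->
  (forall s, in01 s -> q s = q' s) -> forall s, in01 s -> concat p q s = concat p' q' s.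
Proof. intros E1 E2 s hs; unfold concat, in01 in *; destruct Rle_dec; [apply E1|apply E2]; unfold in01; lra. Qed.
Lemma rev_ext {X : Type} (p p' : R -> X) : (forall s, in01 s -> p s = p' s) ->
  forall s, in01 s -> rev_path p s = rev_path p' s.
Proof. intros E s hs; unfold rev_path, in01 in *; apply E; unfold in01; lra. Qed.
Lemma rev_rev {X : Type} (p : R -> X) s : rev_path (rev_path p) s = p s.
Proof. unfold rev_path; f_equal; ring. Qed.
Lemma map_concat {X Y : Type} (f : X -> Y) p q s : f (concat p q s) = concat (fun t => f (p t)) (fun t => f (q t)) s.
Proof. unfold concat; destruct Rle_dec; auto. Qed.
Lemma rev_concat {X : Type} (q r : R -> X) : q 1 = r 0 -> forall s,
  rev_path (concat q r) s = concat (rev_path r) (rev_path q) s.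
Proof.
  intros E s. unfold rev_path, concat. destruct (Rle_dec (1-s) (1/2)), (Rle_dec s (1/2)).
  - replace (2*(1-s)) with 1 by lra. replace (1 - 2*s) with 0 by lra. auto.
  - f_equal; ring.
  - f_equal; ring.
  - lra.
Qed.

Lemma cancel1 Z q n a b c : Pth Z q a b -> Pth Z n b c -> htp Z (concat (rev_path q) (concat q n)) n.
Proof.
  intros Hq Hn.
  eapply htp_trans; [apply htp_sym; eapply G_assoc; eauto 10 with pth|].
  eapply htp_trans; [eapply htp_concat'; [eauto 10 with pth|eauto|apply (G_inv_l Z q a b Hq)|apply htp_refl; eapply Pth_path; eauto]|].
  eapply G_unit_l; eauto.
Qed.

Lemma cancel2 Z n q a b c : Pth Z n a b -> Pth Z q c b -> htp Z (concat (concat n (rev_path q)) q) n.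
Proof.
  intros Hn Hq.
  eapply htp_trans; [eapply G_assoc; eauto 10 with pth|].
  eapply htp_trans; [eapply htp_concat'; [eauto|eauto 10 with pth|apply htp_refl; eapply Pth_path; eauto|apply (G_inv_l Z q c b Hq)]|].
  eapply G_unit_r; eauto.
Qed.

Definition Conj Z m q n := htp Z m (concat q (concat n (rev_path q))).

Lemma C_unique Z l m q n : Conj Z l q n -> Conj Z m q n -> htp Z l m.
Proof. intros H1 H2; eapply htp_trans; [exact H1| apply htp_sym; exact H2]. Qed.

Lemma C_m Z m m' q n : htp Z m m' -> Conj Z m q n -> Conj Z m' q n.
Proof. intros H1 H2; eapply htp_trans; [apply htp_sym; exact H1| exact H2]. Qed.

Lemma C_def Z q n a b : Pth Z q a b -> Pth Z n b b -> Conj Z (concat q (concat n (rev_path q))) q n.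
Proof. intros; apply htp_refl; eapply Pth_path; eauto 10 with pth. Qed.

Lemma C_qext Z m q q' n : Conj Z m q n -> (forall s, in01 s -> q s = q' s) -> Conj Z m q' n.
Proof.
  intros H E. eapply htp_ext; [exact H| auto|].
  apply concat_ext; auto. apply concat_ext; auto. apply rev_ext; auto.
Qed.

Lemma C_n Z m q n n' a b : htp Z n n' -> Pth Z q a b -> Pth Z n b b -> Conj Z m q n -> Conj Z m q n'.
Proof.
  intros Hn Hq Hnn H. eapply htp_trans; [exact H|].
  eapply htp_concat'; [eauto| eauto 10 with pth| apply htp_refl; eapply Pth_path; eauto|].
  eapply htp_concat'; [eauto| eauto 10 with pth| auto | apply htp_refl; eapply Pth_path; eauto 10 with pth].
Qed.

Lemma C_compat Z m q q' n a b : htp Z q q' -> Pth Z q a b -> Pth Z n b b -> Conj Z m q n -> Conj Z m q' n.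
Proof.
  intros Hq Pq Pn H. eapply htp_trans; [exact H|].
  eapply htp_concat'; [eauto| eauto 10 with pth| auto |].
  eapply htp_concat'; [eauto| eauto 10 with pth| apply htp_refl; eapply Pth_path; eauto | apply htp_rev; auto].
Qed.

Lemma C_const Z n a : Pth Z n a a -> Conj Z n (fun _ => a) n.
Proof.
  intros Hn. unfold Conj. apply htp_sym.
  eapply htp_trans; [| eapply G_unit_l; eauto].
  eapply htp_concat'; [apply Pth_const| eauto 10 with pth| apply htp_refl; apply is_path_const|].
  eapply htp_ext; [eapply G_unit_r; eauto| |]; auto.
Qed.

Lemma C_map (Z W : space) (f : Z -> W) m q n : cont Z W f -> Conj Z m q n ->
  Conj W (fun s => f (m s)) (fun s => f (q s)) (fun s => f (n s)).
Proof.
  intros Hf H. eapply htp_ext; [apply htp_map; eauto| auto|].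
  intros s hs. cbv beta. rewrite (map_concat f q (concat n (rev_path q)) s). apply concat_ext; auto.
  intros t _. rewrite (map_concat f n (rev_path q) t). reflexivity.
Qed.

Lemma C_sym Z m q n a b : Pth Z q a b -> Pth Z m a a -> Pth Z n b b -> Conj Z m q n ->
  Conj Z n (rev_path q) m.
Proof.
  intros Pq Pm Pn H. unfold Conj.
  apply (htp_ext Z n (concat (rev_path q) (concat m q))); [| intros; reflexivity |].
  2:{ intros s hs. apply concat_ext; [auto| |exact hs]. apply concat_ext; auto.
      intros; symmetry; apply rev_rev. }
  apply htp_sym.
  assert (A : htp Z (concat m q) (concat q n)).
  { eapply htp_trans; [eapply htp_concat'; [eauto|eauto|exact H|apply htp_refl; eapply Pth_path; eauto]|].
    eapply htp_trans; [eapply G_assoc; eauto 10 with pth|].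
    eapply htp_concat'; [eauto|eauto 10 with pth|apply htp_refl; eapply Pth_path; eauto|].
    eapply cancel2; eauto. }
  eapply htp_trans; [eapply htp_concat'; [eauto 10 with pth|eauto 10 with pth|apply htp_refl; eapply Pth_path; eauto 10 with pth|exact A]|].
  eapply cancel1; eauto.
Qed.

Lemma C_trans Z m q n r o a b c : Pth Z q a b -> Pth Z r b c -> Pth Z m a a -> Pth Z n b b ->
  Pth Z o c c -> Conj Z m q n -> Conj Z n r o -> Conj Z m (concat q r) o.
Proof.
  intros Pq Pr Pm Pn Po H1 H2. unfold Conj.
  assert (E : q 1 = r 0) by (destruct Pq as [_ [_ ?]], Pr as [_ [? _]]; congruence).
  apply (htp_ext Z m (concat (concat q r) (concat o (concat (rev_path r) (rev_path q))))); [| intros; reflexivity |].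
  2:{ intros s hs. apply concat_ext; [auto| |exact hs]. apply concat_ext; auto.
      intros; symmetry; apply rev_concat; auto. }
  eapply htp_trans; [exact H1|].
  eapply htp_trans; [eapply htp_concat'; [eauto|eauto 10 with pth|apply htp_refl; eapply Pth_path; eauto|]|].
  { eapply htp_concat'; [eauto|eauto 10 with pth|exact H2|apply htp_refl; eapply Pth_path; eauto 10 with pth]. }
  apply htp_sym.
  eapply htp_trans; [eapply G_assoc; eauto 10 with pth|].
  eapply htp_concat'; [eauto|eauto 10 with pth|apply htp_refl; eapply Pth_path; eauto|].
  eapply htp_trans; [eapply htp_concat'; [eauto|eauto 10 with pth|apply htp_refl; eapply Pth_path; eauto|]|].
  { apply htp_sym; eapply G_assoc; eauto 10 with pth. }
  apply htp_sym; eapply G_assoc; eauto 10 with pth.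
Qed.

Lemma square Z F : cont2 Z F ->
  htp Z (concat (fun s => F s 0) (fun t => F 1 t)) (concat (fun t => F 0 t) (fun s => F s 1)).
Proof.
  intros HF.
  exists (fun s u => if Rle_dec s (1/2) then F (2*s*(1-u)) (2*s*u)
                   else F ((1-u) + (2*s-1)*u) (u + (2*s-1)*(1-u))). split.
  - change (cont2 Z (fun s u => if Rle_dec s (1/2) then F (2*s*(1-u)) (2*s*u)
                   else F ((1-u) + (2*s-1)*u) (u + (2*s-1)*(1-u)))).
    apply (cont2_ext Z (fun s u => if Rle_dec s (1/2) then F (clamp (2*s)*(1-u)) (clamp (2*s)*u)
                   else F ((1-u) + clamp (2*s-1)*u) (u + clamp (2*s-1)*(1-u)))).
    + apply cont2_paste.
      * apply (cont2_comp Z F (fun s u => clamp (2*s)*(1-u)) (fun s u => clamp (2*s)*u)); side.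
        intros s t _ ht; pose proof (clamp_in (2*s)); unfold in01 in *; split; nra.
      * apply (cont2_comp Z F (fun s u => (1-u) + clamp (2*s-1)*u) (fun s u => u + clamp (2*s-1)*(1-u))); side.
        intros s t _ ht; pose proof (clamp_in (2*s-1)); unfold in01 in *; split; nra.
      * intros t ht. rewrite !clamp_id; unfold in01; try lra. f_equal; field.
    + intros s t hs ht. unfold in01 in *. destruct Rle_dec; rewrite clamp_id; unfold in01; auto; lra.
  - unfold concat. split.
    + intros s hs. destruct Rle_dec; split; f_equal; ring.
    + intros t ht. destruct (Rle_dec 0 (1/2)); [|lra]. destruct (Rle_dec 1 (1/2)); [lra|].
      split; f_equal; ring.
Qed.

Definition inj_at (Z W : space) (f : Z -> W) x := forall l m, Pth Z l x x -> Pth Z m x x ->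
  htp W (fun s => f (l s)) (fun s => f (m s)) -> htp Z l m.
Definition surj_at (Z W : space) (f : Z -> W) x := forall l', Pth W l' (f x) (f x) ->
  exists l, Pth Z l x x /\ htp W (fun s => f (l s)) l'.

Lemma htpy_conj (X : space) (K : X -> R -> X) (h : X -> X) x l :
  cont (prod_space X Iu) X (fun p => K (fst p) (proj1_sig (snd p))) ->
  (forall y, K y 0 = h y /\ K y 1 = y) -> cont X X h -> Pth X l x x ->
  Pth X (fun t => K x t) (h x) x /\ Conj X l (rev_path (fun t => K x t)) (fun s => h (l s)).
Proof.
  intros HK E Hh Pl.
  assert (Pc : Pth X (fun t => K x t) (h x) x).
  { split; [|apply E].
    exact (cont_comp Iu (prod_space X Iu) X (fun t : Iu => ((x, t) : prod_space X Iu)) _ (cont_pair Iu X Iu _ _ (cont_const Iu X x) (cont_id Iu)) HK). }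
  split; auto.
  destruct Pl as [Hl [l0 l1]].
  assert (HF : cont2 X (fun s t => K (l s) t)).
  { exact (cont_comp (prod_space Iu Iu) (prod_space X Iu) X (fun st : prod_space Iu Iu => ((l (proj1_sig (fst st)), snd st) : prod_space X Iu)) _
      (cont_pair _ X Iu _ _ (cont_comp _ _ _ _ _ (cont_fst Iu Iu) Hl) (cont_snd Iu Iu)) HK). }
  pose proof (square X _ HF) as Sq.
  assert (Sq' : htp X (concat (fun s => h (l s)) (fun t => K x t)) (concat (fun t => K x t) l)).
  { eapply htp_ext; [exact Sq| |].
    - intros s hs. apply concat_ext; auto; intros; simpl; [apply E| rewrite l1; auto].
    - intros s hs. apply concat_ext; auto; intros; simpl; [rewrite l0; auto|apply E]. }
  assert (Pl : Pth X l x x) by (split; auto).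
  assert (Phl : Pth X (fun s => h (l s)) (h x) (h x)) by (apply Pth_map; auto).
  unfold Conj.
  apply (htp_ext X l (concat (rev_path (fun t => K x t)) (concat (fun s => h (l s)) (fun t => K x t))));
    [| intros; reflexivity |].
  2:{ intros s hs. apply concat_ext; auto. apply concat_ext; auto. intros; symmetry; apply rev_rev. }
  apply htp_sym.
  eapply htp_trans; [eapply htp_concat'; [eauto 10 with pth|eauto 10 with pth|apply htp_refl; eapply Pth_path; eauto 10 with pth|exact Sq']|].
  eapply cancel1; eauto.
Qed.

Lemma he_inj (X Y : space) (f : X -> Y) (g : Y -> X) : cont X Y f -> cont Y X g ->
  homotopic_maps X X (fun x => g (f x)) (fun x => x) -> forall x, inj_at X Y f x.
Proof.
  intros Hf Hg [K [HK E]] x l m Pl Pm Hlm.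
  assert (Hgf : cont X X (fun x => g (f x))) by (apply (cont_comp _ _ _ f g); auto).
  destruct (htpy_conj X K _ x l HK E Hgf Pl) as [Pc Cl].
  destruct (htpy_conj X K _ x m HK E Hgf Pm) as [_ Cm].
  apply (C_unique X l m (rev_path (fun t => K x t)) (fun s => g (f (l s)))); auto.
  eapply C_n; [| eauto with pth | | exact Cm].
  - apply htp_sym. exact (htp_map _ _ g _ _ Hg Hlm).
  - apply (Pth_map X X (fun x => g (f x))); auto.
Qed.

Lemma he_surj (X Y : space) (f : X -> Y) (g : Y -> X) : cont X Y f -> cont Y X g ->
  homotopic_maps X X (fun x => g (f x)) (fun x => x) -> (forall y, inj_at Y X g y) ->
  forall x, surj_at X Y f x.
Proof.
  intros Hf Hg [K [HK E]] Ginj x l' Pl'.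
  assert (Hgf : cont X X (fun x => g (f x))) by (apply (cont_comp _ _ _ f g); auto).
  set (c := fun t => K x t).
  assert (Pc : Pth X c (g (f x)) x) by (split; [|apply E]; apply (proj1 (htpy_conj X K _ x (fun _ => x) HK E Hgf (Pth_const X x)))).
  assert (Pgl : Pth X (fun s => g (l' s)) (g (f x)) (g (f x))) by (apply Pth_map; auto).
  set (l := concat (rev_path c) (concat (fun s => g (l' s)) (rev_path (rev_path c)))).
  assert (Pl : Pth X l x x) by (unfold l; eauto 10 with pth).
  exists l; split; auto.
  assert (C1 : Conj X (fun s => g (l' s)) (rev_path (rev_path c)) l).
  { apply (C_sym X l (rev_path c) _ x (g (f x))); eauto with pth. apply C_def with (a := x) (b := g (f x)); eauto with pth. }
  destruct (htpy_conj X K _ x l HK E Hgf Pl) as [_ C2].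
  apply (C_sym X l _ _ x (g (f x))) in C2; eauto with pth; [| apply (Pth_map X X (fun x => g (f x))); auto].
  apply (Ginj (f x)); [apply Pth_map; auto| auto|].
  exact (C_unique _ _ _ _ _ C2 C1).
Qed.

Lemma pi_inj (X Y : space) (f : X -> Y) x0 : path_connected X -> cont X Y f -> pi1_iso X Y f x0 ->
  forall x, inj_at X Y f x.
Proof.
  intros [_ PC] Hf [Inj _] x l m Pl Pm Hlm.
  destruct (PC x0 x) as [p [Hp [p0 p1]]]. assert (Pp : Pth X p x0 x) by (split; auto).
  set (l0 := concat p (concat l (rev_path p))). set (m0 := concat p (concat m (rev_path p))).
  assert (Pl0 : Pth X l0 x0 x0) by (unfold l0; eauto 10 with pth).
  assert (Pm0 : Pth X m0 x0 x0) by (unfold m0; eauto 10 with pth).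
  assert (H0 : htp X l0 m0).
  { apply Inj; [exact Pl0|exact Pm0|].
    assert (A : Conj Y (fun s => f (l0 s)) (fun s => f (p s)) (fun s => f (l s)))
      by (apply C_map; auto; apply C_def with (a := x0) (b := x); auto).
    assert (B : Conj Y (fun s => f (m0 s)) (fun s => f (p s)) (fun s => f (l s))).
    { eapply C_n; [apply htp_sym; exact Hlm | apply Pth_map; eauto | apply Pth_map; eauto|].
      apply C_map; auto; apply C_def with (a := x0) (b := x); auto. }
    exact (C_unique _ _ _ _ _ A B). }
  assert (A : Conj X l (rev_path p) l0) by (apply (C_sym X l0 p l x0 x); auto; apply C_def with (a := x0) (b:=x); auto).
  assert (B : Conj X m (rev_path p) l0).
  { eapply C_n; [apply htp_sym; exact H0| eauto with pth| auto|].
    apply (C_sym X m0 p m x0 x); auto; apply C_def with (a := x0) (b:=x); auto. }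
  exact (C_unique _ _ _ _ _ A B).
Qed.

Lemma pi_surj (X Y : space) (f : X -> Y) x0 : path_connected X -> cont X Y f -> pi1_iso X Y f x0 ->
  forall x, surj_at X Y f x.
Proof.
  intros [_ PC] Hf [_ Sur] x l' Pl'.
  destruct (PC x0 x) as [p [Hp [p0 p1]]]. assert (Pp : Pth X p x0 x) by (split; auto).
  assert (Pfp : Pth Y (fun s => f (p s)) (f x0) (f x)) by (apply Pth_map; auto).
  set (l0' := concat (fun s => f (p s)) (concat l' (rev_path (fun s => f (p s))))).
  assert (Pl0' : Pth Y l0' (f x0) (f x0)) by (unfold l0'; eauto 10 with pth).
  destruct (Sur l0' Pl0') as [l0 [Pl0 Hl0]].
  set (l := concat (rev_path p) (concat l0 (rev_path (rev_path p)))).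
  assert (Pl : Pth X l x x) by (unfold l; eauto 10 with pth).
  exists l; split; auto.
  assert (A : Conj Y (fun s => f (l s)) (rev_path (fun s => f (p s))) l0').
  { eapply C_n; [exact Hl0| | apply Pth_map; eauto |].
    - apply Pth_rev; exact Pfp.
    - change (Conj Y (fun s => f (l s)) (fun s => f (rev_path p s)) (fun s => f (l0 s))).
      apply C_map; auto. apply C_def with (a := x) (b := x0); eauto with pth. }
  assert (B : Conj Y l' (rev_path (fun s => f (p s))) l0').
  { apply (C_sym Y l0' _ l' (f x0) (f x)); auto. apply C_def with (a := f x0) (b := f x); auto. }
  exact (C_unique _ _ _ _ _ A B).
Qed.

Lemma lift_path (X Y : space) (f : X -> Y) b a q : path_connected X -> cont X Y f ->
  surj_at X Y f b -> Pth Y q (f b) (f a) ->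
  exists p, Pth X p b a /\ htp Y (fun s => f (p s)) q.
Proof.
  intros [_ PC] Hf Sur Pq.
  destruct (PC b a) as [p0 [Hp0 [e0 e1]]]. assert (Pp0 : Pth X p0 b a) by (split; auto).
  assert (Pfp : Pth Y (fun s => f (p0 s)) (f b) (f a)) by (apply Pth_map; auto).
  destruct (Sur (concat q (rev_path (fun s => f (p0 s))))) as [m [Pm Hm]]; [eauto with pth|].
  exists (concat m p0); split; [eauto with pth|].
  apply (htp_ext Y (concat (fun s => f (m s)) (fun s => f (p0 s))) q); [| intros; symmetry; apply map_concat | auto].
  eapply htp_trans; [eapply htp_concat'; [apply Pth_map; eauto| eauto| exact Hm| apply htp_refl; eapply Pth_path; eauto]|].
  eapply cancel2; eauto.
Qed.

Lemma core (X Y : space) (f : X -> Y) n : path_connected X -> cont X Y f ->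
  (forall x, inj_at X Y f x) -> (forall x, surj_at X Y f x) -> TCD_le Y n -> TCD_le X n.
Proof.
  intros PC Hf Inj Sur [V [HV Cov]].
  set (ff := fun p : prod_space X X => ((f (fst p), f (snd p)) : prod_space Y Y)).
  assert (Hff : cont (prod_space X X) (prod_space Y Y) ff).
  { apply cont_pair; apply (cont_comp _ X Y); auto; [apply cont_fst|apply cont_snd]. }
  exists (fun i p => V i (ff p)). split.
  - intros i hi. destruct (HV i hi) as [Ho HD]. split; [apply Hff; auto|].
    intros [a b] Uu. destruct (HD _ Uu) as [z' [g' [Hg' [g'0 [g'1 Prop']]]]].
    set (g1' := fun t => fst (g' t)). set (g2' := fun t => snd (g' t)).
    assert (Pg1 : Pth Y g1' (f a) z').
    { split; [exact (cont_comp _ _ _ _ _ Hg' (cont_fst Y Y))|]. unfold g1'; rewrite g'0, g'1; auto. }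
    assert (Pg2 : Pth Y g2' (f b) z').
    { split; [exact (cont_comp _ _ _ _ _ Hg' (cont_snd Y Y))|]. unfold g2'; rewrite g'0, g'1; auto. }
    destruct (lift_path X Y f b a (concat g2' (rev_path g1')) PC Hf (Sur b)) as [g2 [Pg2x Hg2]];
      [eauto with pth|].
    exists a, (fun t => (a, g2 t)).
    destruct Pg2x as [Hg2p [g20 g21]].
    split; [exact (is_path_pair X X _ _ (is_path_const X a) Hg2p)|].
    split; [rewrite g20; auto|]. split; [rewrite g21; auto|].
    intros l [Hl [l0 l1]] Ul.
    set (l1' := fun t => fst (l t)). set (l2' := fun t => snd (l t)).
    assert (Pl1 : Pth X l1' a a).
    { split; [exact (cont_comp _ _ _ _ _ Hl (cont_fst X X))|]. unfold l1'; rewrite l0, l1; auto. }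
    assert (Pl2 : Pth X l2' b b).
    { split; [exact (cont_comp _ _ _ _ _ Hl (cont_snd X X))|]. unfold l2'; rewrite l0, l1; auto. }
    destruct (Prop' (fun t => ff (l t))) as [d' [[Hd' [d'0 d'1]] Hh]].
    { split; [exact (cont_comp _ _ _ _ _ Hl Hff)|]. unfold ff; rewrite l0, l1; auto. }
    { intros t ht; apply Ul; auto. }
    assert (Pd : Pth Y d' z' z') by (split; auto).
    assert (C1 : Conj Y (fun s => f (l1' s)) g1' d').
    { eapply htp_ext; [exact (htp_map (prod_space Y Y) Y (@fst Y Y) _ _ (cont_fst Y Y) Hh)| intros; reflexivity|].
      intros s hs. unfold concat, rev_path, g1'. repeat destruct Rle_dec; reflexivity. }
    assert (C2 : Conj Y (fun s => f (l2' s)) g2' d').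
    { eapply htp_ext; [exact (htp_map (prod_space Y Y) Y (@snd Y Y) _ _ (cont_snd Y Y) Hh)| intros; reflexivity|].
      intros s hs. unfold concat, rev_path, g2'. repeat destruct Rle_dec; reflexivity. }
    assert (Pfl1 : Pth Y (fun s => f (l1' s)) (f a) (f a)) by (apply Pth_map; auto).
    assert (Pfl2 : Pth Y (fun s => f (l2' s)) (f b) (f b)) by (apply Pth_map; auto).
    assert (C3 : Conj Y d' (rev_path g1') (fun s => f (l1' s))) by (apply (C_sym Y _ _ _ (f a) z'); auto).
    assert (C4 := C_trans Y _ _ _ _ _ (f b) z' (f a) Pg2 (Pth_rev _ _ _ _ Pg1) Pfl2 Pd Pfl1 C2 C3).
    assert (Pg2f : Pth Y (fun s => f (g2 s)) (f b) (f a)) by (apply Pth_map; auto; split; auto).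
    assert (C5 : Conj Y (fun s => f (l2' s)) (fun s => f (g2 s)) (fun s => f (l1' s))).
    { eapply C_compat; [apply htp_sym; exact Hg2| eauto with pth| exact Pfl1| exact C4]. }
    assert (C6 : Conj X l2' g2 l1').
    { apply (Inj b); auto.
      - assert (Pg2x : Pth X g2 b a) by (split; auto). eauto 10 with pth.
      - eapply htp_ext; [exact C5| intros; reflexivity|].
        intros s hs. unfold concat, rev_path. repeat destruct Rle_dec; reflexivity. }
    assert (C7 : Conj X l1' (fun _ => a) l1') by (apply C_const; auto).
    exists l1'; split; [exact Pl1|].
    eapply htp_ext; [exact (htp_pair X X _ _ _ _ C7 C6)| |].
    + intros s hs. unfold l1', l2'. destruct (l s); reflexivity.
    + intros s hs. unfold concat, rev_path. simpl. repeat destruct Rle_dec; reflexivity.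
  - intros p. exact (Cov (ff p)).
Qed.

Lemma minimize Z n : TCD_le Z n -> exists m, TCD Z m /\ (m <= n)%nat.
Proof.
  induction n as [n IH] using lt_wf_ind. intros Hn.
  destruct (classic (exists k, (k < n)%nat /\ TCD_le Z k)) as [[k [Hk Tk]]|Hno].
  - destruct (IH k Hk Tk) as [m [Tm Hm]]. exists m; split; auto. lia.
  - exists n; split; auto. split; auto. intros k Hk Tk. apply Hno; eauto.
Qed.

Theorem mainTheorem5 :
  (forall (X Y : space) (f : X -> Y) (x0 : X),
      path_connected X -> path_connected Y -> cont X Y f ->
      pi1_iso X Y f x0 ->
      forall n, TCD Y n -> exists m, TCD X m /\ (m <= n)%nat) /\
  (forall X Y : space,
      path_connected X -> path_connected Y -> homotopy_equivalent X Y ->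
      forall n, TCD X n <-> TCD Y n).
Proof.
  split.
  - intros X Y f x0 PX PY Hf Hiso n [Tn _]. apply minimize.
    apply (core X Y f n PX Hf); auto; [apply (pi_inj X Y f x0)|apply (pi_surj X Y f x0)]; auto.
  - intros X Y PX PY [f [g [Hf [Hg [H1 H2]]]]].
    assert (If := he_inj X Y f g Hf Hg H1). assert (Ig := he_inj Y X g f Hg Hf H2).
    assert (Sf := he_surj X Y f g Hf Hg H1 Ig). assert (Sg := he_surj Y X g f Hg Hf H2 If).
    assert (E : forall k, TCD_le X k <-> TCD_le Y k).
    { intros k; split; [apply (core Y X g k PY Hg Ig Sg)|apply (core X Y f k PX Hf If Sf)]. }
    intros n; unfold TCD; split; intros [A B]; split; try apply E; auto;
      intros k Hk C; apply (B k Hk); apply E; auto.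
Qed.
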